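(* Let $b\in\mathcal S(\kappa,R,\lambda)$ with $\kappa>0$, $R,\lambda\ge0$. For $\varsigma\in\mathcal C([0,1],\mathbb R^n)$ with $\varsigma(0)=0$, $u\in L^\infty([0,1],\mathbb R^n)$ and $x_0\in\mathbb R^n$, let $x^{\varsigma,u}$ solve $x^{\varsigma,u}(t)=x_0+\int_0^tb(x^{\varsigma,u}(s))\,ds+\varsigma(t)+\int_0^tu(s)\,ds$, $t\in[0,1]$. Let $\eta<\frac12$ and $\bar R>0$. Then there is $M>0$ such that for each such $\varsigma$ and each $x_0\in\mathbb R^n$ there is a piecewise constant control $u\in L^\infty([0,1],\mathbb R^n)$ with $|u|_\infty+|\mathcal D_u|\le M$ such that $\mathrm{Leb}(\{t\in[0,1]:|x^{\varsigma,u}(t)|>\bar R\})\ge\eta$.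
   Context: $\mathcal S(\kappa,R,\lambda)$ is the set of Lipschitz $b:\mathbb R^n\to\mathbb R^n$ with $\langle b(x)-b(y),x-y\rangle\le-\kappa|x-y|^2$ if $|x|,|y|\ge R$ and $\le\lambda|x-y|^2$ otherwise. For a piecewise constant $u:[0,1]\to\mathbb R^n$, $\mathcal D_u\subset[0,1]$ is its finite set of discontinuities and $|\mathcal D_u|$ its cardinality. *)

(* Defs.v *)
From mathcomp Require Import all_boot all_order all_algebra.
From mathcomp Require Import all_classical all_reals all_analysis.
Set Implicit Arguments. Unset Strict Implicit. Unset Printing Implicit Defensive.
Import Order.TTheory GRing.Theory Num.Theory.
Import numFieldNormedType.Exports.
Local Open Scope classical_set_scope.
Local Open Scope ring_scope.

Section Defs.
Variables (R : realType) (n : nat).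
Notation vec := 'rV[R]_n.

Definition dotv (x y : vec) : R := \sum_(i < n) x ord0 i * y ord0 i.
Definition enorm (x : vec) : R := Num.sqrt (dotv x x).

Definition lipschitz (b : vec -> vec) : Prop :=
  exists L : R, forall x y, enorm (b x - b y) <= L * enorm (x - y).

Definition in_S (kappa R0 lambda : R) (b : vec -> vec) : Prop :=
  lipschitz b /\
  forall x y : vec,
    (R0 <= enorm x -> R0 <= enorm y ->
       dotv (b x - b y) (x - y) <= - kappa * enorm (x - y) ^+ 2) /\
    (~ (R0 <= enorm x /\ R0 <= enorm y) ->
       dotv (b x - b y) (x - y) <= lambda * enorm (x - y) ^+ 2).

Definition vint (f : R -> vec) (t : R) : vec :=
  \row_(i < n) Rintegral (@lebesgue_measure R) `[0, t] (fun s => f s ord0 i).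

Definition solves (b : vec -> vec) (x0 : vec) (sigma u x : R -> vec) : Prop :=
  {within `[0, 1], continuous x} /\
  forall t, 0 <= t <= 1 ->
    x t = x0 + vint (b \o x) t + sigma t + vint u t.

(* u is piecewise constant on [0,1] with discontinuity set exactly s:
   with p = 0 :: s ++ [:: 1] strictly increasing, u is constant on each
   [p_i, p_{i+1}) (and on the last closed piece [p_k-1, 1]), and the values
   on consecutive pieces differ (so each point of s is a genuine jump). *)
Definition piecewise_constant (u : R -> vec) (s : seq R) : Prop :=
  let p := 0 :: rcons s 1 in
  sorted <%R p /\
  (forall i : nat, (i < size s)%N ->
     forall t, nth 0 p i <= t < nth 0 p i.+1 -> u t = u (nth 0 p i)) /\
  (forall t, last 0 (0 :: s) <= t <= 1 -> u t = u (last 0 (0 :: s))) /\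
  (forall i : nat, (i < size s)%N -> u (nth 0 p i) != u (nth 0 p i.+1)).

End Defs.

(* Main.v *)
Require Import Defs.
From mathcomp Require Import all_boot all_order all_algebra.
From mathcomp Require Import all_classical all_reals all_analysis.
From mathcomp Require Import ring lra measurable_realfun.
Import Order.TTheory GRing.Theory Num.Theory.
Import numFieldNormedType.Exports.
Local Open Scope classical_set_scope.
Local Open Scope ring_scope.
Set Implicit Arguments. Unset Strict Implicit. Unset Printing Implicit Defensive.
Section Norms.
Variables (R : realType) (n : nat).
Implicit Types y z : 'rV[R]_n.

Definition N1 y : R := \sum_i `|y ord0 i|.

Lemma N1_ge0 y : 0 <= N1 y.
Proof. by apply: sumr_ge0 => i _. Qed.

Lemma coord_le_N1 y i : `|y ord0 i| <= N1 y.
Proof.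
rewrite /N1 (bigD1 i) //= lerDl; by apply: sumr_ge0 => j _.
Qed.

Lemma dotv_ge0 y : 0 <= dotv y y.
Proof. by apply: sumr_ge0 => i _; rewrite -expr2 sqr_ge0. Qed.

Lemma coord_le_enorm y i : `|y ord0 i| <= enorm y.
Proof.
rewrite /enorm -sqrtr_sqr ler_sqrt; last exact: dotv_ge0.
rewrite /dotv (bigD1 i) //= expr2 lerDl.
by apply: sumr_ge0 => j _; rewrite -expr2 sqr_ge0.
Qed.

Lemma enorm_le_N1 y : enorm y <= N1 y.
Proof.
rewrite /enorm -(ger0_norm (N1_ge0 y)) -sqrtr_sqr ler_sqrt; last exact: sqr_ge0.
rewrite expr2 {2}/N1 mulr_sumr /dotv.
apply: ler_sum => i _.
rewrite -[y ord0 i * y ord0 i]ger0_norm -?expr2 ?sqr_ge0 // normrX expr2.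
apply: ler_wpM2r => //; exact: coord_le_N1.
Qed.

Lemma N1_sub_sym y z : N1 (y - z) = N1 (z - y).
Proof. by apply: eq_bigr => i _; rewrite !mxE distrC. Qed.

End Norms.
Section Cont.
Variables (R : realType) (n : nat).
Implicit Types y z : 'rV[R]_n.

Lemma coord_le_mxnorm y j : `|y ord0 j| <= `|y|.
Proof.
have -> : `|y| = mx_norm y by [].
rewrite mx_normrE.
exact: (le_bigmax _ (fun ij : 'I_1 * 'I_n => `|y ij.1 ij.2|) (ord0, j)).
Qed.

Lemma N1_le_mxnorm y : N1 y <= n%:R * `|y|.
Proof.
have -> : n%:R * `|y| = \sum_(j < n) `|y| by rewrite sumr_const card_ord mulr_natl.
rewrite /N1; apply: ler_sum => j _.
exact: coord_le_mxnorm.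
Qed.

Lemma coord_lip (b : 'rV[R]_n -> 'rV[R]_n) (L : R) :
  (forall x y, enorm (b x - b y) <= L * enorm (x - y)) ->
  forall y z i, `|b y ord0 i - b z ord0 i| <= `|L| * N1 (y - z).
Proof.
move=> hL y z i.
have -> : b y ord0 i - b z ord0 i = (b y - b z) ord0 i by rewrite !mxE.
apply: (le_trans (coord_le_enorm _ _)); apply: (le_trans (hL _ _)).
apply: (le_trans (ler_norm _)); rewrite normrM.
apply: ler_wpM2l => //; rewrite ger0_norm; last by rewrite /enorm sqrtr_ge0.
exact: enorm_le_N1.
Qed.

Lemma coord_b_continuous (b : 'rV[R]_n -> 'rV[R]_n) (L : R) :
  (forall x y, enorm (b x - b y) <= L * enorm (x - y)) ->
  forall i, continuous (fun y => b y ord0 i).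
Proof.
move=> hL i y; apply/(@cvgrPdist_lt _ _ _ (nbhs y) (nbhs_filter y)) => e e0.
have hK : 0 < (`|L| + 1) * (n%:R + 1) by apply: mulr_gt0; rewrite ltr_wpDl.
near=> z.
apply: (le_lt_trans (coord_lip hL y z i)).
apply: (le_lt_trans (ler_wpM2l (normr_ge0 L) (N1_le_mxnorm (y - z)))).
have hz : `|y - z| < e / ((`|L| + 1) * (n%:R + 1)).
  near: z. apply: (@cvgr_dist_lt _ _ _ (nbhs y) (nbhs_filter y) id y) => //.
  by rewrite divr_gt0.
rewrite ltr_pdivlMr // in hz.
apply: le_lt_trans hz.
rewrite mulrA mulrC mulrA -mulrA; apply: ler_wpM2l => //.
apply: ler_pM => //; by rewrite lerDl.
Unshelve. all: by end_near.
Qed.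

End Cont.
Section Integ.
Variable (R : realType).
Notation mu := (@lebesgue_measure R).

Lemma itv_cc_fin (a b : R) : (mu `[a, b] < +oo)%E.
Proof. by rewrite lebesgue_measure_itv /=; case: ifP => _; rewrite ?ltry // -EFinD ltry. Qed.

Lemma int_cst_cc (a b C : R) : mu.-integrable `[a, b] (EFin \o cst C).
Proof.
apply: measurable_bounded_integrable => //.
- exact: itv_cc_fin.
- exact: bounded_cst.
Qed.

Lemma Rint_cst_cc (a b C : R) : a <= b ->
  Rintegral mu `[a, b] (fun _ => C) = C * (b - a).
Proof.
move=> ab; rewrite Rintegral_cst //= lebesgue_measure_itv /=.
rewrite lte_fin; case: ltP => /= h; first by [].
have -> : b = a by apply/eqP; rewrite eq_le ab h.
by rewrite subrr.
Qed.

Lemma Rint_split_co (f : R -> R) (a m t : R) : a <= m <= t ->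
  mu.-integrable `[a, t] (EFin \o f) ->
  Rintegral mu `[a, t] f = Rintegral mu `[a, m[ f + Rintegral mu `[m, t] f.
Proof.
move=> /andP[am mt] hf.
rewrite (@itv_bndbnd_setU _ _ _ (BLeft m)) ?bnd_simp //.
rewrite Rintegral_setU //.
- by rewrite -(@itv_bndbnd_setU _ _ _ (BLeft m)) ?bnd_simp.
- apply/disj_setPS => x [] /=; rewrite !in_itv /= => /andP[_ xm] /andP[mx _].
  by move: (lt_le_trans xm mx); rewrite ltxx.
Qed.

Lemma Rint_split_oc (f : R -> R) (a m t : R) : a <= m <= t ->
  mu.-integrable `[a, t] (EFin \o f) ->
  Rintegral mu `[a, t] f = Rintegral mu `[a, m] f + Rintegral mu `]m, t] f.
Proof.
move=> /andP[am mt] hf.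
rewrite (@itv_bndbnd_setU _ _ _ (BRight m)) ?bnd_simp //.
rewrite Rintegral_setU //.
- by rewrite -(@itv_bndbnd_setU _ _ _ (BRight m)) ?bnd_simp.
- apply/disj_setPS => x [] /=; rewrite !in_itv /= => /andP[_ xm] /andP[mx _].
  by move: (lt_le_trans mx xm); rewrite ltxx.
Qed.

Lemma Rint_abs_mono (f : R -> R) (a t b : R) : a <= t <= b ->
  mu.-integrable `[a, b] (EFin \o f) ->
  Rintegral mu `[a, t] (fun s => `|f s|) <= Rintegral mu `[a, b] (fun s => `|f s|).
Proof.
move=> atb hf.
rewrite (@Rint_split_oc (fun s => `|f s|) a t b) //; last exact: integrable_norm.
by rewrite lerDl; apply: Rintegral_ge0 => x _.
Qed.

Lemma int_bound (g : R -> R) (a t C : R) : 0 <= a <= t ->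
  mu.-integrable `[0, t] (EFin \o g) ->
  (forall s, 0 <= s -> s < a -> g s = 0) ->
  (forall s, a <= s <= t -> `|g s| <= C) ->
  `|Rintegral mu `[0, t] g| <= C * (t - a).
Proof.
move=> /andP[a0 at_] hg g0 gC.
apply: (le_trans (le_normr_Rintegral _ _)) => //.
rewrite (@Rint_split_co (fun s => `|g s|) 0 a t) ?a0 //; last exact: integrable_norm.
have -> : Rintegral mu `[0, a[ (fun s => `|g s|) = 0.
  rewrite (@eq_Rintegral _ _ _ mu _ (fun _ => 0)); first by rewrite Rintegral_cst // mul0r.
  move=> s; rewrite inE /= in_itv /= => /andP[s0 sa]; by rewrite g0 // normr0.
rewrite add0r -Rint_cst_cc //.
apply: le_Rintegral => //=.
all: try exact: int_cst_cc.
all: try (by move=> s; rewrite /= in_itv /= => /gC).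
all: try (apply: integrable_norm; apply: integrableS hg => //; by apply: subset_itvr; rewrite bnd_simp).
Qed.

End Integ.
Section Core.
Variable (R : realType).
Notation mu := (@lebesgue_measure R).

Lemma lim_half (y c B : R) : 0 <= B ->
  (forall m : nat, y <= c + B / 2 ^+ m) -> y <= c.
Proof.
move=> B0 H; rewrite leNgt; apply/negP => cy.
set e := y - c.
have e0 : 0 < e by rewrite subr_gt0.
have /archi_boundP := divr_ge0 B0 (ltW e0).
set m := Num.Def.archi_bound _ => hm.
have := H m; rewrite -lerBlDl -/e => h1.
have : B / 2 ^+ m < e.
  rewrite ltr_pdivrMr ?exprn_gt0 //.
  rewrite ltr_pdivrMr // in hm.
  apply: (lt_le_trans hm); rewrite mulrC; apply: ler_wpM2l; first exact: ltW.
  rewrite -natrX ler_nat; apply: ltnW; exact: ltn_expl.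
by rewrite ltNge h1.
Qed.

Variable (n : nat).

Lemma core (K V a h : R) (D g v : 'I_n -> R -> R) :
  0 <= K -> 0 <= a -> 0 <= V -> n%:R * K * h <= 1 / 2 ->
  (forall i, mu.-integrable `[0, 1] (EFin \o g i)) ->
  (forall i t, 0 <= t <= 1 -> D i t = Rintegral mu `[0, t] (g i) + v i t) ->
  (forall i s, 0 <= s <= 1 -> `|g i s| <= K * \sum_j `|D j s|) ->
  (forall s j, 0 <= s -> s < a -> D j s = 0) ->
  (forall t, a <= t < a + h -> t <= 1 -> \sum_i `|v i t| <= V) ->
  forall t, a <= t < a + h -> t <= 1 -> \sum_i `|D i t| <= 2 * V.
Proof.
move=> K0 a0 V0 hKh gint hD hg hD0 hv.
have gintt i t : 0 <= t <= 1 -> mu.-integrable `[0, t] (EFin \o g i).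
  move=> /andP[_ t1]; apply: integrableS (gint i) => //.
  by apply: subset_itvl; rewrite bnd_simp.
set B := \sum_i Rintegral mu `[0, 1] (fun s => `|g i s|) + V.
have B0 : 0 <= B.
  by apply: addr_ge0 => //; apply: sumr_ge0 => i _; apply: Rintegral_ge0.
suff H : forall m t, a <= t < a + h -> t <= 1 ->
    \sum_i `|D i t| <= 2 * V + B / 2 ^+ m.
  by move=> t ht t1; apply: (lim_half B0) => m; exact: H.
elim=> [|m IH] t /andP[at_ th] t1.
- have t01 : 0 <= t <= 1 by rewrite t1 (le_trans a0 at_).
  rewrite expr0 divr1; apply: (@le_trans _ _ B); last by rewrite lerDr mulr_ge0.
  apply: (@le_trans _ _ (\sum_i (Rintegral mu `[0, 1] (fun s => `|g i s|) + `|v i t|))).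
    apply: ler_sum => i _; rewrite hD //.
    apply: (le_trans (ler_normD _ _)); apply: lerD => //.
    apply: (le_trans (le_normr_Rintegral _ _)) => //; first exact: gintt.
    by apply: (Rint_abs_mono _ (gint i)); rewrite t1 (le_trans a0 at_).
  rewrite big_split /= /B; apply: lerD => //; apply: hv => //; by rewrite at_ th.
- have t01 : 0 <= t <= 1 by rewrite t1 (le_trans a0 at_).
  set Q := 2 * V + B / 2 ^+ m.
  have Q0 : 0 <= Q by rewrite addr_ge0 ?mulr_ge0 ?divr_ge0 ?exprn_ge0.
  apply: (@le_trans _ _ (\sum_(i < n) (K * Q * (t - a) + `|v i t|))).
    apply: ler_sum => i _; rewrite hD //.
    apply: (le_trans (ler_normD _ _)); apply: lerD => //.
    apply: int_bound.
    + by rewrite a0.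
    + exact: gintt.
    + move=> s s0 sa; apply/eqP; rewrite -normr_le0.
      apply: (le_trans (hg i s _)); first by rewrite s0 (le_trans (ltW sa)) // (le_trans at_).
      rewrite big1 ?mulr0 // => j _; by rewrite hD0 // normr0.
    + move=> s /andP[sa st]; apply: (le_trans (hg i s _)).
        by rewrite (le_trans a0 sa) (le_trans st).
      apply: ler_wpM2l => //; apply: IH => //; last exact: (le_trans st).
      by rewrite sa (le_lt_trans st th).
  rewrite big_split /= sumr_const card_ord.
  have hvt : \sum_i `|v i t| <= V by apply: hv => //; rewrite at_ th.
  have h2 : Q / 2 = V + B / 2 ^+ m.+1 by rewrite /Q exprS; field.
  have h1 : (K * Q * (t - a)) *+ n <= Q / 2.
    rewrite -mulr_natl.
    have -> : n%:R * (K * Q * (t - a)) = (n%:R * K * (t - a)) * Q by ring.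
    rewrite [Q / 2]mulrC; apply: ler_wpM2r => //.
    rewrite mul1r in hKh; apply: (le_trans _ hKh); apply: ler_wpM2l; first by rewrite mulr_ge0.
    by rewrite lerBlDl ltW.
  have := lerD h1 hvt; rewrite h2 => hh; apply: (le_trans hh).
  lra.
Qed.
End Core.
Section Control.
Variables (R : realType) (n : nat) (i0 : 'I_n) (Np : nat) (c : R).
Local Notation N := Np.+1.

Definition grid (j : nat) : R := j%:R / N%:R.
Definition wv (tau : nat -> bool) (k : nat) : R :=
  (if tau k then 1 else -1) + (if odd k then 3 else 0).
Definition Wf (tau : nat -> bool) (t : R) : R :=
  wv tau 0 + \sum_(1 <= j < N) (grid j <= t)%R%:R * (wv tau j - wv tau j.-1).
Definition ev : 'rV[R]_n := \row_j ((j == i0)%:R).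
Definition uc (tau : nat -> bool) (t : R) : 'rV[R]_n := (c * Wf tau t) *: ev.

Lemma N_gt0 : (0 : R) < N%:R. Proof. by rewrite ltr0n. Qed.

Lemma tt_le j k : (j <= k)%N -> grid j <= grid k.
Proof. by move=> jk; rewrite /grid ler_pM2r ?invr_gt0 ?N_gt0 // ler_nat. Qed.

Lemma tt_lt j k : (j < k)%N -> grid j < grid k.
Proof. by move=> jk; rewrite /grid ltr_pM2r ?invr_gt0 ?N_gt0 // ltr_nat. Qed.

Lemma tt0 : grid 0 = 0. Proof. by rewrite /grid mul0r. Qed.
Lemma ttN : grid N = 1. Proof. by rewrite /grid divff // pnatr_eq0. Qed.

Lemma telesc (f : nat -> R) k :
  \sum_(1 <= j < k.+1) (f j - f j.-1) = f k - f 0.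
Proof.
elim: k => [|k IH]; first by rewrite big_geq // subrr.
by rewrite big_nat_recr //= IH addrC addrA subrK.
Qed.

Lemma Wf_on tau k t : (k < N)%N -> grid k <= t -> ((k.+1 < N)%N -> t < grid k.+1) ->
  Wf tau t = wv tau k.
Proof.
move=> kN kt tk; rewrite /Wf (big_cat_nat _ (n := k.+1)) //=.
rewrite [X in _ + (_ + X)]big1_seq ?addr0; last first.
  move=> j /andP[_]; rewrite mem_index_iota => /andP[kj jN].
  have : t < grid j by apply: (lt_le_trans (tk (leq_ltn_trans kj jN))); exact: tt_le.
  by rewrite ltNge => /negbTE ->; rewrite mul0r.
rewrite (eq_big_nat _ _ (F2 := fun j => wv tau j - wv tau j.-1)).
  by rewrite telesc addrC subrK.
move=> j /andP[j1 jk]; have -> : grid j <= t by apply: le_trans kt; exact: tt_le.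
by rewrite mul1r.
Qed.

Lemma exists_piece t : 0 <= t ->
  exists k, [/\ (k < N)%N, grid k <= t & ((k.+1 < N)%N -> t < grid k.+1)].
Proof.
move=> t0.
have ex : exists k, (k < N)%N && (grid k <= t) by exists 0%N; rewrite tt0 t0.
have bnd : forall k, (k < N)%N && (grid k <= t) -> (k <= N)%N.
  by move=> k /andP[/ltnW].
case: (ex_maxnP ex bnd) => k /andP[kN kt] kmax.
exists k; split => // k1N; rewrite ltNge; apply/negP => ht.
by have := kmax k.+1; rewrite k1N ht => /(_ isT); rewrite ltnn.
Qed.

Lemma wv_bound tau k : `|wv tau k| <= 4.
Proof. rewrite /wv ler_norml; case: (tau k); case: (odd k); apply/andP; split; lra. Qed.

Lemma Wf_bound tau t : 0 <= t -> `|Wf tau t| <= 4.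
Proof. by move=> /exists_piece [k [kN kt tk]]; rewrite (Wf_on _ kN kt tk) wv_bound. Qed.

Lemma wv_neq tau k : wv tau k != wv tau k.+1.
Proof.
rewrite /wv /=; case: (odd k); case: (tau k); case: (tau k.+1) => /=;
  apply/negP => /eqP; lra.
Qed.

Lemma measurable_Wf tau : measurable_fun (setT : set (measurableTypeR R)) (Wf tau).
Proof.
apply: measurable_funD; first exact: measurable_cst.
apply: measurable_sum => j.
apply: measurable_funM; last exact: measurable_cst.
have -> : (fun t => (grid j <= t)%R%:R) = (\1_`[grid j, +oo[ : R -> R).
  apply/funext => t; rewrite indicE.
  have -> : (t \in `[grid j, +oo[%classic) = (grid j <= t)%R => //.
  apply/idP/idP => [/set_mem|h]; first by rewrite /= in_itv /= andbT.
  by apply/mem_set; rewrite /= in_itv /= h.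
exact: measurable_indic.
Qed.

Lemma measurable_uc tau i : measurable_fun (setT : set (measurableTypeR R)) (fun s => uc tau s ord0 i).
Proof.
have -> : (fun s => uc tau s ord0 i) = (fun s => c * Wf tau s * ev ord0 i).
  by apply/funext => s; rewrite /uc !mxE.
apply: measurable_funM; last exact: measurable_cst.
apply: measurable_funM; first exact: measurable_cst.
exact: measurable_Wf.
Qed.

Lemma dotv_ev : dotv ev ev = 1.
Proof.
rewrite /dotv (bigD1 i0) //= big1 ?addr0; first by rewrite !mxE eqxx mulr1.
by move=> j /negbTE ji; rewrite !mxE ji mulr0.
Qed.

Lemma enorm_scale_ev a : enorm (a *: ev) = `|a|.
Proof.
rewrite /enorm /dotv.
have -> : \sum_i (a *: ev) ord0 i * (a *: ev) ord0 i = a ^+ 2 * dotv ev ev.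
  by rewrite /dotv mulr_sumr; apply: eq_bigr => i _; rewrite !mxE; ring.
by rewrite dotv_ev mulr1 sqrtr_sqr.
Qed.

End Control.
Arguments tt_lt {R Np j k}.
Arguments tt_le {R Np j k}.
Arguments measurable_uc {R n i0 Np c}.
Arguments Wf_on {R Np tau k t}.
Arguments Wf_bound {R Np tau t}.
Arguments exists_piece {R Np t}.
Section PC.
Variables (R : realType) (n : nat) (i0 : 'I_n) (Np : nat) (c : R).
Local Notation N := Np.+1.
Local Notation grid := (@grid R Np).
Local Notation uc := (@uc R n i0 Np c).
Local Notation Wf := (@Wf R Np).

Definition sgrid : seq R := [seq grid j | j <- iota 1 Np].

Lemma p_eq : 0 :: rcons sgrid 1 = [seq grid j | j <- iota 0 N.+1].
Proof.
have -> : iota 0 N.+1 = 0%N :: rcons (iota 1 Np) N.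
  have h m k : iota m k.+1 = rcons (iota m k) (m + k) by rewrite -addn1 iotaD cats1.
  have -> : iota 0 N.+1 = 0%N :: iota 1 N by [].
  by rewrite h.
by rewrite map_cons map_rcons tt0 ttN.
Qed.

Lemma nth_p i : (i <= N)%N -> nth 0 (0 :: rcons sgrid 1) i = grid i.
Proof. by move=> iN; rewrite p_eq (nth_map 0%N) ?size_iota ?nth_iota. Qed.

Lemma uc_pc tau : c != 0 -> piecewise_constant (uc tau) sgrid.
Proof.
move=> c0; rewrite /piecewise_constant; split; [|split; [|split]].
- rewrite p_eq sorted_map; apply: sub_sorted (iota_ltn_sorted 0 _) => j k /=.
  exact: tt_lt.
- move=> i; rewrite size_map size_iota => iNp t.
  have iN : (i < N)%N by apply: (ltn_trans iNp).
  rewrite !nth_p ?(ltnW iN) // => /andP[it ti].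
  rewrite /uc (Wf_on iN it (fun _ => ti)).
  by rewrite (Wf_on iN (lexx _) (fun _ => tt_lt (ltnSn i))).
- have hl : last 0 (0 :: sgrid) = grid Np.
    rewrite -nth_last /= size_map size_iota.
    have := nth_p (leqnSn Np).
    rewrite -[0 :: rcons sgrid 1]/(rcons (0 :: sgrid) 1) nth_rcons /= size_map size_iota ltnSn.
    by [].
  rewrite hl => t /andP[tl t1].
  rewrite /uc (Wf_on (k := Np)) ?(Wf_on (k := Np)) //; by move=> /=; rewrite ltnn.
- move=> i; rewrite size_map size_iota => iNp.
  have iN : (i < N)%N by apply: (ltn_trans iNp).
  rewrite !nth_p ?(ltnW iN) //.
  rewrite /uc (Wf_on iN (lexx _) (fun _ => tt_lt (ltnSn i))).
  rewrite (Wf_on (iNp : (i.+1 < N)%N) (lexx _) (fun _ => tt_lt (ltnSn i.+1))).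
  apply/negP => /eqP h; have := congr1 (fun M : 'rV[R]_n => M ord0 i0) h.
  rewrite /ev !mxE eqxx !mulr1 => /(mulfI c0) /eqP.
  by apply/negP; exact: wv_neq.
Qed.

End PC.
Section Sol.
Variables (R : realType) (n : nat) (b : 'rV[R]_n -> 'rV[R]_n) (L : R)
  (hL : forall x y, enorm (b x - b y) <= L * enorm (x - y))
  (x0 : 'rV[R]_n) (sigma : R -> 'rV[R]_n).
Notation mu := (@lebesgue_measure R).

Lemma sol_coord_cont u x : solves b x0 sigma u x ->
  forall i, {within `[0, 1], continuous (fun t => x t ord0 i)}.
Proof.
move=> [hx _] i.
apply: (@within_continuous_comp _ _ _ _ x (fun M : 'rV[R]_n => M ord0 i)) => //.
by move=> M _; exact: coord_continuous.
Qed.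

Lemma sol_b_int u x : solves b x0 sigma u x ->
  forall i, mu.-integrable `[0, 1] (EFin \o (fun s => b (x s) ord0 i)).
Proof.
move=> [hx _] i.
apply: continuous_compact_integrable; first exact: segment_compact.
apply: (@within_continuous_comp _ _ _ _ x (fun M : 'rV[R]_n => b M ord0 i)) => //.
by move=> M _; exact: (coord_b_continuous hL).
Qed.

Lemma int01_sub (f : R -> R) t : 0 <= t <= 1 ->
  mu.-integrable `[0, 1] (EFin \o f) -> mu.-integrable `[0, t] (EFin \o f).
Proof.
move=> /andP[_ t1] hf; apply: integrableS hf => //.
by apply: subset_itvl; rewrite bnd_simp.
Qed.

Lemma diff_eq u1 u2 x y : solves b x0 sigma u1 x -> solves b x0 sigma u2 y ->
  (forall i t, 0 <= t <= 1 -> mu.-integrable `[0, t] (EFin \o (fun s => u1 s ord0 i))) ->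
  (forall i t, 0 <= t <= 1 -> mu.-integrable `[0, t] (EFin \o (fun s => u2 s ord0 i))) ->
  forall i t, 0 <= t <= 1 ->
  x t ord0 i - y t ord0 i =
    Rintegral mu `[0, t] (fun s => b (x s) ord0 i - b (y s) ord0 i) +
    (Rintegral mu `[0, t] (fun s => u1 s ord0 i) - Rintegral mu `[0, t] (fun s => u2 s ord0 i)).
Proof.
move=> sx sy hu1 hu2 i t ht.
rewrite (sx.2 t ht) (sy.2 t ht) /vint !mxE /=.
rewrite RintegralB //; last 2 first.
- exact: int01_sub (sol_b_int sx i).
- exact: int01_sub (sol_b_int sy i).
ring.
Qed.

End Sol.
Section Main.
Variables (R : realType) (n : nat) (i0 : 'I_n) (b : 'rV[R]_n -> 'rV[R]_n) (L : R)
  (hL : forall x y, enorm (b x - b y) <= L * enorm (x - y))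
  (x0 : 'rV[R]_n) (sigma : R -> 'rV[R]_n) (Np : nat) (c : R).
Local Notation N := Np.+1.
Local Notation grid := (@grid R Np).
Local Notation uc := (@uc R n i0 Np c).
Local Notation Wf := (@Wf R Np).
Local Notation wv := (@wv R).
Notation mu := (@lebesgue_measure R).
Hypothesis hK : n%:R * `|L| * (1 / N%:R) <= 1 / 4.

Lemma grid_step k : grid k + 1 / N%:R = grid k.+1.
Proof. by rewrite /grid -[(k.+1)%:R]natr1 mulrDl mul1r. Qed.

Lemma grid_ge0 k : 0 <= grid k.
Proof. by rewrite -(tt0 R Np); exact: tt_le. Qed.

Lemma grid_le1 k : (k <= N)%N -> grid k <= 1.
Proof. by move=> kN; rewrite -(ttN R Np); exact: tt_le. Qed.

Lemma uc_bound tau s i : 0 <= s -> `|uc tau s ord0 i| <= `|c| * 4.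
Proof.
move=> s0; rewrite /uc /ev !mxE normrM normrM -[X in _ <= X]mulr1.
apply: ler_pM => //.
- by apply: ler_wpM2l => //; exact: Wf_bound.
- by case: (_ == _); rewrite ?normr1 ?normr0.
Qed.

Lemma uc_int tau i t : mu.-integrable `[0, t] (EFin \o (fun s => uc tau s ord0 i)).
Proof.
apply: measurable_bounded_integrable => //.
- exact: itv_cc_fin.
- exact: (measurable_funS _ (@subsetT _ _) (measurable_uc tau i)).
- rewrite /bounded_near; near=> M => s /= As.
  apply: (le_trans (uc_bound tau i _)); first by move: As; rewrite in_itv /= => /andP[].
  by near: M; exact: nbhs_pinfty_ge.
Unshelve. all: by end_near.
Qed.

Lemma uc_int' tau i t : 0 <= t <= 1 -> mu.-integrable `[0, t] (EFin \o (fun s => uc tau s ord0 i)).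
Proof. by move=> _; exact: uc_int. Qed.

Lemma Wf_agree tau tau' m s : (forall j, (j < m)%N -> tau j = tau' j) ->
  0 <= s -> s < grid m -> Wf tau s = Wf tau' s.
Proof.
move=> ag s0 sm; have [p [pN ps sp]] := exists_piece (Np := Np) s0.
rewrite (Wf_on pN ps sp) (Wf_on pN ps sp).
have pm : (p < m)%N.
  rewrite ltnNge; apply/negP => mp.
  by have := le_lt_trans (le_trans (tt_le mp) ps) sm; rewrite ltxx.
by rewrite /wv ag.
Qed.

Lemma int_subR (D : set R) (f g : R -> R) : measurable D ->
  mu.-integrable D (EFin \o f) -> mu.-integrable D (EFin \o g) ->
  mu.-integrable D (EFin \o (fun s => f s - g s)).
Proof.
move=> mD hf hg.
have -> : EFin \o (fun s => f s - g s) = ((EFin \o f) \- (EFin \o g))%E.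
  by apply/funext => s /=; rewrite EFinB.
exact: integrableB.
Qed.

Lemma core_sol u1 u2 x y a V :
  solves b x0 sigma u1 x -> solves b x0 sigma u2 y ->
  (forall i t, 0 <= t <= 1 -> mu.-integrable `[0, t] (EFin \o (fun s => u1 s ord0 i))) ->
  (forall i t, 0 <= t <= 1 -> mu.-integrable `[0, t] (EFin \o (fun s => u2 s ord0 i))) ->
  0 <= a -> 0 <= V ->
  (forall s, 0 <= s -> s < a -> x s = y s) ->
  (forall t, a <= t < a + 1 / N%:R -> t <= 1 ->
     \sum_i `|Rintegral mu `[0, t] (fun s => u1 s ord0 i) -
               Rintegral mu `[0, t] (fun s => u2 s ord0 i)| <= V) ->
  forall t, a <= t < a + 1 / N%:R -> t <= 1 ->
    \sum_i `|x t ord0 i - y t ord0 i| <= 2 * V.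
Proof.
move=> sx sy hu1 hu2 a0 V0 hxy hv.
apply: (@core R n `|L| V a (1 / N%:R) (fun i t => x t ord0 i - y t ord0 i)
  (fun i s => b (x s) ord0 i - b (y s) ord0 i)
  (fun i t => Rintegral mu `[0, t] (fun s => u1 s ord0 i) -
              Rintegral mu `[0, t] (fun s => u2 s ord0 i))) => //.
- by apply: (le_trans hK); lra.
- move=> i; apply: int_subR => //; [exact: (sol_b_int hL sx) | exact: (sol_b_int hL sy)].
- by move=> i t ht; exact: (diff_eq hL sx sy hu1 hu2).
- move=> i s _; apply: (le_trans (coord_lip hL (x s) (y s) i)).
  by rewrite /N1 ler_wpM2l //; apply: ler_sum => j _; rewrite !mxE.
- by move=> s j s0 sa; rewrite hxy // subrr.
Qed.

Lemma agree_sol tau tau' k x y : (k <= N)%N ->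
  (forall j, (j < k)%N -> tau j = tau' j) ->
  solves b x0 sigma (uc tau) x -> solves b x0 sigma (uc tau') y ->
  forall s, 0 <= s -> s < grid k -> x s = y s.
Proof.
elim: k => [|k IH] kN ag sx sy s s0 sk.
  by move: sk; rewrite (tt0 R Np) => /(le_lt_trans s0); rewrite ltxx.
have IH' : forall s, 0 <= s -> s < grid k -> x s = y s.
  apply: IH => //; first exact: ltnW.
  by move=> j jk; apply: ag; exact: ltnW.
case: (ltP s (grid k)) => [ssk|ks]; first exact: IH'.
have s1 : s <= 1 by apply: ltW; apply: (lt_le_trans sk); exact: grid_le1.
have hv : forall t, grid k <= t < grid k + 1 / N%:R -> t <= 1 ->
    \sum_i `|Rintegral mu `[0, t] (fun s => uc tau s ord0 i) -
              Rintegral mu `[0, t] (fun s => uc tau' s ord0 i)| <= 0.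
  move=> t /andP[kt]; rewrite grid_step => tk t1.
  rewrite big1 // => i _.
  rewrite (@eq_Rintegral _ _ _ mu _ (fun s => uc tau' s ord0 i)); first by rewrite subrr normr0.
  move=> r; rewrite inE /= in_itv /= => /andP[r0 rt].
  by rewrite /uc (Wf_agree ag r0 (le_lt_trans rt tk)).
have sk' : s < grid k + 1 / N%:R by rewrite grid_step.
have := @core_sol _ _ x y (grid k) 0 sx sy (uc_int' tau) (uc_int' tau')
  (grid_ge0 k) (lexx 0) IH' hv s (introT andP (conj ks sk')) s1.
rewrite mulr0 => hs0.
apply/rowP => j; apply/eqP; rewrite -subr_eq0 -normr_le0.
apply: le_trans hs0; rewrite (bigD1 j) //= lerDl.
by apply: sumr_ge0 => ? _.
Qed.

Lemma v_eq tau tau' k t : (forall j, (j < k)%N -> tau j = tau' j) -> (k < N)%N ->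
  grid k <= t < grid k.+1 -> forall i,
  Rintegral mu `[0, t] (fun s => uc tau s ord0 i) -
  Rintegral mu `[0, t] (fun s => uc tau' s ord0 i)
  = c * (wv tau k - wv tau' k) * @ev R n i0 ord0 i * (t - grid k).
Proof.
move=> ag kN /andP[kt tk] i.
rewrite -RintegralB //; [|exact: uc_int|exact: uc_int].
rewrite (@Rint_split_co _ _ 0 (grid k) t); last 2 first.
- by rewrite grid_ge0 kt.
- by apply: int_subR => //; exact: uc_int.
rewrite (@eq_Rintegral _ _ _ mu `[0, grid k[ (fun _ => 0)); last first.
  move=> r; rewrite inE /= in_itv /= => /andP[r0 rk].
  by rewrite /uc (Wf_agree ag r0 rk) subrr.
rewrite Rintegral_cst // mul0r add0r.
rewrite (@eq_Rintegral _ _ _ mu `[grid k, t]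
   (fun _ => c * (wv tau k - wv tau' k) * @ev R n i0 ord0 i)); last first.
  move=> r; rewrite inE /= in_itv /= => /andP[kr rt].
  rewrite /uc !mxE (Wf_on kN kr (fun _ => le_lt_trans rt tk)).
  rewrite (Wf_on kN kr (fun _ => le_lt_trans rt tk)); ring.
by rewrite Rint_cst_cc.
Qed.

Lemma n_ge1 : (1 : R) <= n%:R.
Proof. by rewrite ler1n; case: i0 => i hi; exact: (leq_ltn_trans (leq0n i) hi). Qed.

Lemma sep_sol (Rbar : R) tau tau' k x y : 0 < c -> 0 < Rbar -> (k < N)%N ->
  (forall j, (j < k)%N -> tau j = tau' j) -> tau k != tau' k ->
  solves b x0 sigma (uc tau) x -> solves b x0 sigma (uc tau') y ->
  forall t, grid k + 3 * Rbar / c <= t -> t < grid k.+1 ->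
  2 * Rbar < `|x t ord0 i0| + `|y t ord0 i0|.
Proof.
move=> hc hR kN ag nk sx sy t kbt tk.
set a := grid k; pose h : R := 1 / N%:R.
have a0 : 0 <= a := grid_ge0 k.
have hah : a + h = grid k.+1 := grid_step k.
have hxy : forall s, 0 <= s -> s < a -> x s = y s := agree_sol (ltnW kN) ag sx sy.
set d := c * (wv tau k - wv tau' k).
have hd : `|d| = 2 * c.
  rewrite /d normrM gtr0_norm // mulrC; congr (_ * _).
  have -> : wv tau k - wv tau' k = (if tau k then 1 else -1) - (if tau' k then 1 else -1).
    by rewrite /wv; ring.
  by move: nk; case: (tau k); case: (tau' k) => //= _;
    [rewrite ger0_norm | rewrite ler0_norm]; lra.
have hRc : 0 <= 3 * Rbar / c by apply: divr_ge0; [apply: mulr_ge0 => //; exact: ltW | exact: ltW].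
have kt : a <= t by apply: le_trans kbt; rewrite lerDl.
have t1 : t <= 1 by apply: ltW; apply: (lt_le_trans tk); exact: grid_le1.
have t01 : 0 <= t <= 1 by rewrite t1 (le_trans a0 kt).
have hv : forall s, a <= s < a + h -> s <= 1 ->
    \sum_i `|Rintegral mu `[0, s] (fun r => uc tau r ord0 i) -
              Rintegral mu `[0, s] (fun r => uc tau' r ord0 i)| <= 2 * c * h.
  move=> s /andP[sa sh] s1; rewrite hah in sh.
  rewrite (eq_bigr (fun i => `|d * @ev R n i0 ord0 i * (s - a)|)); last first.
    by move=> i _; rewrite (v_eq ag kN (introT andP (conj sa sh))).
  rewrite (bigD1 i0) //= big1 ?addr0; last first.
    by move=> j /negbTE ji; rewrite /ev mxE ji mulr0 mul0r normr0.
  rewrite /ev mxE eqxx mulr1 normrM hd ger0_norm ?subr_ge0 //.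
  apply: ler_wpM2l; first by rewrite mulr_ge0 // ltW.
  by move: sh; rewrite -hah => sh; lra.
have V0 : 0 <= 2 * c * h.
  by apply: mulr_ge0; [apply: mulr_ge0 => //; exact: ltW | apply: divr_ge0].
have hD := @core_sol _ _ x y a (2 * c * h) sx sy (uc_int' tau) (uc_int' tau') a0
  V0 hxy hv.
set G := Rintegral mu `[0, t] (fun s => b (x s) ord0 i0 - b (y s) ord0 i0).
have E1 : x t ord0 i0 - y t ord0 i0 = G + d * (t - a).
  rewrite (diff_eq hL sx sy (uc_int' tau) (uc_int' tau') i0 t01).
  rewrite (v_eq ag kN (introT andP (conj kt tk))) /ev mxE eqxx mulr1.
  by [].
have hKh : `|L| * h <= 1 / 4.
  apply: le_trans hK; rewrite -mulrA ler_peMl //; first by rewrite mulr_ge0 // divr_ge0.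
  exact: n_ge1.
have tk' : t < a + h by rewrite hah.
have E2 : `|G| <= c * (t - a).
  have := @int_bound R (fun s => b (x s) ord0 i0 - b (y s) ord0 i0) a t
    (`|L| * (2 * (2 * c * h))) (introT andP (conj a0 kt)).
  move=> /(_ _ _ _) hG; apply: le_trans (hG _ _ _) _.
  - apply: int01_sub => //; apply: int_subR => //;
      [exact: (sol_b_int hL sx) | exact: (sol_b_int hL sy)].
  - by move=> s s0 sa; rewrite hxy // subrr.
  - move=> s /andP[sa st].
    apply: (le_trans (coord_lip hL (x s) (y s) i0)); apply: ler_wpM2l => //.
    have s1 : s <= 1 := le_trans st t1.
    have := hD s (introT andP (conj sa (le_lt_trans st tk'))) s1.
    by apply: le_trans; rewrite /N1; apply: ler_sum => j _; rewrite !mxE.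
  - rewrite ler_wpM2r ?subr_ge0 //.
    have -> : `|L| * (2 * (2 * c * h)) = 4 * c * (`|L| * h) by ring.
    have c0 : 0 <= 4 * c by rewrite mulr_ge0 // ltW.
    by apply: le_trans (ler_wpM2l c0 hKh) _; lra.
have E3 : 3 * Rbar <= c * (t - a).
  have H : 3 * Rbar / c <= t - a by move: kbt; rewrite -/a => kbt; lra.
  have := ler_wpM2r (ltW hc) H; rewrite divfK ?gt_eqF // => H2.
  by rewrite [c * _]mulrC.
have E4 : `|d * (t - a)| = 2 * c * (t - a) by rewrite normrM hd ger0_norm // subr_ge0.
have E5 : `|d * (t - a)| <= `|x t ord0 i0 - y t ord0 i0| + `|G|.
  have -> : d * (t - a) = (x t ord0 i0 - y t ord0 i0) - G by rewrite E1; ring.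
  exact: ler_normB.
have E6 := ler_normB (x t ord0 i0) (y t ord0 i0).
lra.
Qed.

End Main.
Section Msets.
Variables (R : realType) (n : nat).
Notation mu := (@lebesgue_measure R).

Lemma coord_meas (x : R -> 'rV[R]_n) (i : 'I_n) : {within `[0, 1], continuous x} ->
  measurable_fun (`[0, 1] : set R) (fun t => x t ord0 i).
Proof.
move=> hx; apply: subspace_continuous_measurable_fun => //.
apply: (@within_continuous_comp _ _ _ _ x (fun M : 'rV[R]_n => M ord0 i)) => //.
by move=> M _; exact: coord_continuous.
Qed.

Lemma meas_A0 (x : R -> 'rV[R]_n) (i : 'I_n) (lo hi Rb : R) : {within `[0, 1], continuous x} ->
  0 <= lo -> hi <= 1 ->
  measurable [set t | (lo <= t < hi) /\ Rb < `|x t ord0 i|].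
Proof.
move=> hx lo0 hi1.
have mf : measurable_fun (`[0, 1] : set R) (fun t => `|x t ord0 i|).
  apply: measurableT_comp; [exact: normr_measurable | exact: coord_meas].
have mf' : measurable_fun (`[lo, hi[ : set R) (fun t => `|x t ord0 i|).
  apply: (measurable_funS _ _ mf) => // t /=; rewrite !in_itv /= => /andP[lt th].
  by rewrite (le_trans lo0 lt) (le_trans (ltW th) hi1).
have := mf' (measurable_itv _) _ (measurable_itv `]Rb, +oo[).
congr measurable; apply/seteqP; split => t /=.
- by rewrite !in_itv /= andbT => -[].
- by rewrite !in_itv /= andbT => -[].
Qed.

Lemma meas_A (x : R -> 'rV[R]_n) (Rb : R) : {within `[0, 1], continuous x} ->
  measurable [set t | (0 <= t <= 1) /\ Rb < enorm (x t)].
Proof.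
move=> hx.
have mf : measurable_fun (`[0, 1] : set R) (fun t => enorm (x t)).
  apply: (measurableT_comp (continuous_measurable_fun (@sqrt_continuous R))).
  apply: measurable_sum => i.
  by apply: measurable_funM; exact: coord_meas.
have := mf (measurable_itv _) _ (measurable_itv `]Rb, +oo[).
congr measurable; apply/seteqP; split => t /=.
- by rewrite !in_itv /= andbT => -[].
- by rewrite !in_itv /= andbT => -[].
Qed.

End Msets.
Section Greedy.
Variables (R : realType) (n : nat) (i0 : 'I_n) (b : 'rV[R]_n -> 'rV[R]_n) (L : R)
  (hL : forall x y, enorm (b x - b y) <= L * enorm (x - y))
  (x0 : 'rV[R]_n) (sigma : R -> 'rV[R]_n) (Np : nat) (c : R) (Rbar : R).
Local Notation N := Np.+1.
Local Notation grid := (@grid R Np).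
Local Notation uc := (@uc R n i0 Np c).
Notation mu := (@lebesgue_measure R).
Hypothesis hK : n%:R * `|L| * (1 / N%:R) <= 1 / 4.
Hypothesis hc : 0 < c.
Hypothesis hR : 0 < Rbar.

Definition beta := 3 * Rbar / c.
Definition A0 (x : R -> 'rV[R]_n) (j : nat) : set R :=
  [set t | (grid j + beta <= t < grid j.+1) /\ Rbar < `|x t ord0 i0|].
Definition Abig (x : R -> 'rV[R]_n) : set R :=
  [set t | (0 <= t <= 1) /\ Rbar < enorm (x t)].

Lemma beta_ge0 : 0 <= beta.
Proof. by apply: divr_ge0; [apply: mulr_ge0 => //; exact: ltW | exact: ltW]. Qed.

Lemma meas_A0' (x : R -> 'rV[R]_n) (j : nat) : {within `[0, 1], continuous x} -> (j < N)%N -> measurable (A0 x j).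
Proof.
move=> hx jN; apply: meas_A0 => //.
- by apply: addr_ge0; [exact: grid_ge0 | exact: beta_ge0].
- exact: grid_le1.
Qed.


Lemma greedy (X : (nat -> bool) -> R -> 'rV[R]_n) :
  (forall tau, solves b x0 sigma (uc tau) (X tau)) ->
  forall k, (k <= N)%N -> exists tau, forall tau', (forall j, (j < k)%N -> tau' j = tau j) ->
    ((k%:R * ((1 / N%:R - beta) / 2))%:E <= \sum_(j < k) mu (A0 (X tau') j))%E.
Proof.
move=> hX; elim => [|k IH] kN.
  by exists (fun _ => true) => tau' _; rewrite big_ord0 mul0r.
have [tau Htau] := IH (ltnW kN).
pose tb (bb : bool) := fun j => if j == k then bb else tau j.
have agb bb : forall j, (j < k)%N -> tb bb j = tau j.
  by move=> j jk; rewrite /tb (ltn_eqF jk).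
set q := ((1 / N%:R - beta) / 2)%R.
have hq : forall bb, (q%:E <= mu (A0 (X (tb bb)) k))%E ->
   exists tau0, forall tau', (forall j, (j < k.+1)%N -> tau' j = tau0 j) ->
    ((k.+1%:R * q)%:E <= \sum_(j < k.+1) mu (A0 (X tau') j))%E.
  move=> bb Hb; exists (tb bb) => tau' ag'.
  rewrite big_ord_recr /= -natr1 mulrDl mul1r EFinD.
  apply: leeD.
    apply: Htau => j jk; rewrite ag'; [exact: agb | exact: (ltn_trans jk)].
  have E : A0 (X tau') k = A0 (X (tb bb)) k.
    apply/seteqP; split => t /= [/andP[kt tk] h]; (split; first by rewrite kt tk).
    - rewrite -(agree_sol hL hK kN ag' (hX tau') (hX (tb bb))) //.
      by apply: (le_trans _ kt); apply: addr_ge0; [exact: grid_ge0 | exact: beta_ge0].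
    - rewrite (agree_sol hL hK kN ag' (hX tau') (hX (tb bb))) //.
      by apply: (le_trans _ kt); apply: addr_ge0; [exact: grid_ge0 | exact: beta_ge0].
  by rewrite E.
have ag : forall j, (j < k)%N -> tb true j = tb false j by move=> j jk; rewrite !agb.
have nk : tb true k != tb false k by rewrite /tb eqxx.
have hsep := @sep_sol R n i0 b L hL x0 sigma Np c hK Rbar (tb true) (tb false) k
  (X (tb true)) (X (tb false)) hc hR kN ag nk (hX _) (hX _).
have bge0 : (0 <= grid k + beta)%R.
  by apply: addr_ge0; [exact: grid_ge0 | exact: beta_ge0].
have m1 := meas_A0' (hX (tb true)).1 kN.
have m2 := meas_A0' (hX (tb false)).1 kN.
have sub : (`[grid k + beta, grid k.+1[ : set R) `<=` A0 (X (tb true)) k `|` A0 (X (tb false)) k.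
  move=> t /=; rewrite in_itv /= => /andP[kt tk].
  have := hsep t kt tk.
  case: (ltP Rbar `|X (tb true) t ord0 i0|) => h1.
    by move=> _; left; split => //; rewrite kt tk.
  case: (ltP Rbar `|X (tb false) t ord0 i0|) => h2.
    by move=> _; right; split => //; rewrite kt tk.
  move=> h3; exfalso; move: h1 h2 h3; lra.
have mJ : ((1 / N%:R - beta)%:E <= mu (`[(grid k + beta)%R, grid k.+1[ : set R))%E.
  rewrite lebesgue_measure_itv /= lte_fin; case: ltP => h.
    by rewrite -EFinB lee_fin -grid_step; set hN := 1 / N%:R; lra.
  by rewrite lee_fin; move: h; rewrite -grid_step; set hN := 1 / N%:R; lra.
have mU : (mu (`[(grid k + beta)%R, grid k.+1[ : set R) <=
    mu (A0 (X (tb true)) k) + mu (A0 (X (tb false)) k))%E.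
  apply: (le_trans _ (measureU2 mu m1 m2)).
  apply: le_measure => //; rewrite inE //; exact: measurableU.
case: (pselect (q%:E <= mu (A0 (X (tb true)) k))%E) => H1; first exact: (hq true).
case: (pselect (q%:E <= mu (A0 (X (tb false)) k))%E) => H2; first exact: (hq false).
exfalso; move/negP: H1; rewrite -ltNge => H1; move/negP: H2; rewrite -ltNge => H2.
have := lteD H1 H2; rewrite -EFinD.
have -> : q + q = 1 / N%:R - beta by rewrite /q; field.
move=> H3; have := le_lt_trans (le_trans mJ mU) H3; by rewrite ltxx.
Qed.

Lemma trivA0 x : trivIset `I_N (A0 x).
Proof.
apply/trivIsetP => i j _ _ ij; apply/seteqP; split => // t /= [[/andP[it ti] _] [/andP[jt tj] _]].
have bb := beta_ge0.
case: (ltngtP i j) => h; last by rewrite h eqxx in ij.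
- have := tt_le (R := R) (Np := Np) h; move: it ti jt tj; lra.
- have := tt_le (R := R) (Np := Np) h; move: it ti jt tj; lra.
Qed.

Lemma main_exists :
  exists tau, forall x, solves b x0 sigma (uc tau) x ->
    ((N%:R * ((1 / N%:R - beta) / 2))%:E <= mu (Abig x))%E.
Proof.
apply: contrapT => H.
have H' : forall tau, exists x, (solves b x0 sigma (uc tau) x /\
    ~ ((N%:R * ((1 / N%:R - beta) / 2))%:E <= mu (Abig x))%E).
  move=> tau; move/forallNP: H => /(_ tau) /existsNP [x /not_implyP hx].
  by exists x.
have [X HX] := choice H'.
have [tau Ht] := greedy (fun tau => (HX tau).1) (leqnn N).
have := Ht tau (fun _ _ => erefl).
have hx := (HX tau).1.
rewrite -measure_semi_additive_ord_I; last first.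
- by apply: bigsetU_measurable => j _; apply: meas_A0' (hx.1) _.
- exact: trivA0.
- by move=> j jN; apply: meas_A0' (hx.1) _.
move=> H2; apply: (HX tau).2; apply: (le_trans H2).
apply: le_measure; rewrite ?inE.
- by apply: bigsetU_measurable => j _; apply: meas_A0' (hx.1) _.
- exact: meas_A hx.1.
rewrite -bigcup_mkord => t [j /= jN [/andP[jt tj] h]]; split.
- apply/andP; split.
    by apply: le_trans jt; apply: addr_ge0; [exact: grid_ge0 | exact: beta_ge0].
  by apply: ltW; apply: (lt_le_trans tj); exact: grid_le1.
- exact: (lt_le_trans h (coord_le_enorm _ _)).
Qed.

End Greedy.
Unset Implicit Arguments.

Theorem proposition3p9 (R : realType) (n : nat) (hn : (0 < n)%N)
  (b : 'rV[R]_n -> 'rV[R]_n) (kappa R0 lambda : R)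
  (hkappa : 0 < kappa) (hR0 : 0 <= R0) (hlambda : 0 <= lambda)
  (hb : in_S kappa R0 lambda b)
  (eta Rbar : R) (heta : eta < 1 / 2) (hRbar : 0 < Rbar) :
  exists M : R, 0 < M /\
    forall (sigma : R -> 'rV[R]_n) (x0 : 'rV[R]_n),
      {within `[0, 1], continuous sigma} -> sigma 0 = 0 ->
      exists (u : R -> 'rV[R]_n) (s : seq R) (c : R),
        piecewise_constant u s /\ 0 <= c /\
        (forall t, 0 <= t <= 1 -> enorm (u t) <= c) /\
        c + (size s)%:R <= M /\
        (forall x : R -> 'rV[R]_n, solves b x0 sigma u x ->
           (eta%:E <= (@lebesgue_measure R)
                        [set t : R | ((0 <= t <= 1) /\ (Rbar < enorm (x t)))%R])%E).
Proof.
move: hb => [[L hL] _].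
pose i0 : 'I_n := Ordinal hn.
pose th := 1 - 2 * eta.
have th0 : 0 < th by rewrite /th; lra.
pose P := n%:R * `|L|.
have P0 : 0 <= P by rewrite /P mulr_ge0.
pose Np := Num.Def.archi_bound (4 * P).
have hNp : 4 * P < Np%:R by apply: archi_boundP; rewrite mulr_ge0.
have N0 : (0 : R) < Np.+1%:R by rewrite ltr0n.
have hK : n%:R * `|L| * (1 / Np.+1%:R) <= 1 / 4.
  have h4 : P * 4 <= Np.+1%:R by rewrite -natr1; lra.
  rewrite -/P mul1r ler_pdivrMr // (mulrC (1 / 4)) mul1r ler_pdivlMr //.
pose c := 3 * Rbar * Np.+1%:R / th.
have hc : 0 < c by rewrite /c !mulr_gt0 // ?invr_gt0 //; lra.
exists (4 * c + Np%:R); split.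
  by apply: ltr_pwDl; [rewrite mulr_gt0 | rewrite ler0n].
move=> sigma x0 _ _.
have [tau Ht] := @main_exists R n i0 b L hL x0 sigma Np c Rbar hK hc hRbar.
exists (uc i0 Np c tau), (sgrid R Np), (4 * c); split.
  by apply: uc_pc; rewrite gt_eqF.
split; first by rewrite mulr_ge0 // ltW.
split.
  move=> t /andP[t0 _]; rewrite /uc enorm_scale_ev normrM gtr0_norm // mulrC.
  by apply: ler_wpM2r; [exact: ltW | exact: Wf_bound].
split; first by rewrite /sgrid size_map size_iota.
move=> x hx; have := Ht x hx.
have -> : Np.+1%:R * ((1 / Np.+1%:R - beta c Rbar) / 2) = eta.
  rewrite /beta /c /th; field; rewrite gt_eqF //; lra.
by [].
Qed.
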